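(* Let $\theta>1$ and $r\in(\theta^{-1},\theta^{-1/2}]$. Let $\mathsf{A}$ be any deterministic online algorithm for one-max search with predictions having robustness $r$ and consistency $\frac1{r\theta}$. Suppose there is $u\in\mathbb{R}$ such that for all $n\ge1$, all $p\in[1,\theta]^n$ with maximum $p^*$ and all $y\in[1,\theta]$, \[ \frac{\mathsf{A}(p,y)}{p^*}\ge\max\Big(r,\ \frac{1}{r\theta}\,\mathcal{E}(p^*,y)^{u}\Big). \] Then $u\ge \frac{\ln\theta}{\ln(r\theta)}-2$.
   Context: One-max search: fix $\theta>1$. An instance is a sequence of prices $p=(p_1,\dots,p_n)\in[1,\theta]^n$, revealed one at a time; the algorithm receives at the start a prediction $y\in[1,\theta]$ of $p^*:=\max_ip_i$. At each step it irrevocably accepts the current price (payoff = that price) or rejects it; if nothing is accepted by step $n$ the payoff is $1$. $\mathsf{A}(p,y)$ is the payoff. Consistency: $\inf_p \mathsf{A}(p,p^* )/p^*$; robustness: $\inf_{p,y}\mathsf{A}(p,y)/p^*$. The multiplicative error is $\mathcal{E}(p^*,y)=\min\{p^*/y,\,y/p^*\}$. *)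

(* Defs.v *)
From mathcomp Require Import all_boot all_order all_algebra.
From mathcomp Require Import all_classical all_reals all_analysis.
Set Implicit Arguments. Unset Strict Implicit. Unset Printing Implicit Defensive.
Import Order.TTheory GRing.Theory Num.Theory.
Local Open Scope ring_scope.
Local Open Scope classical_set_scope.

Section OneMax.
Variable R : realType.

(* A deterministic online algorithm: given the prediction y and the prefix
   (p_1, ..., p_i) of prices revealed so far (the last one being the current
   price), it decides (true = accept) whether to accept the current price p_i. *)
Definition algorithm := R -> seq R -> bool.

(* Run the decision rule [acc] on the remaining prices [p], [hist] being the
   prices already revealed (and rejected). Payoff 1 if nothing is accepted. *)
Fixpoint run (acc : seq R -> bool) (hist : seq R) (p : seq R) : R :=
  match p with
  | [::] => 1
  | x :: q => if acc (rcons hist x) then x else run acc (rcons hist x) q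
  end.

Definition payoff (A : algorithm) (p : seq R) (y : R) : R := run (A y) [::] p.

Definition instance (theta : R) (p : seq R) : Prop :=
  (0 < size p)%N /\ all (fun x => 1 <= x <= theta) p.

(* p^* = max_i p_i  (all prices are >= 1 and p is nonempty, so this is the max) *)
Definition pmax (p : seq R) : R := \big[Num.max/1]_(x <- p) x.

Definition mult_err (ps y : R) : R := Num.min (ps / y) (y / ps).

Definition robustness (theta : R) (A : algorithm) : R :=
  inf [set z | exists p y, instance theta p /\ 1 <= y <= theta /\
                           z = payoff A p y / pmax p].

Definition consistency (theta : R) (A : algorithm) : R :=
  inf [set z | exists p, instance theta p /\ z = payoff A p (pmax p) / pmax p].

End OneMax.

(* Main.v *)
Require Import Defs.
From mathcomp Require Import all_boot all_order all_algebra.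
From mathcomp Require Import all_classical all_reals all_analysis.
From mathcomp Require Import ring lra.
Import Order.TTheory GRing.Theory Num.Theory.
Local Open Scope ring_scope.

Lemma powR_expR (R : realType) (t u : R) : (expR t) `^ u = expR (u * t).
Proof. by rewrite /powR gt_eqF ?expR_gt0 // expRK. Qed.

Lemma divexp (R : realType) (x y : R) : expR x / expR y = expR (x - y).
Proof. by rewrite expRD expRN. Qed.

Theorem theorem3 (R : realType) (theta r u : R) (A : algorithm R) :
  1 < theta ->
  theta^-1 < r -> r <= theta `^ (- 2^-1) ->
  robustness theta A = r ->
  consistency theta A = (r * theta)^-1 ->
  (forall (p : seq R) (y : R), instance theta p -> 1 <= y <= theta ->
     Num.max r ((r * theta)^-1 * (mult_err (pmax p) y) `^ u)
       <= payoff A p y / pmax p) ->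
  ln theta / ln (r * theta) - 2 <= u.
Proof.
move=> th1 rlo rhi _ _ H.
have th0 : 0 < theta by apply: lt_trans th1.
have r0 : 0 < r by apply: le_lt_trans rlo; rewrite invr_ge0 ltW.
have rth1 : 1 < r * theta.
  by rewrite -(mulVf (negbT (gt_eqF th0))) ltr_pM2r.
set L := ln theta. set a := ln (r * theta).
have thE : theta = expR L by rewrite lnK // posrE.
have a0 : 0 < a by apply: ln_gt0.
have rE : r = expR (a - L).
  by rewrite -divexp /a /L !lnK ?posrE ?mulr_gt0 // mulfK // gt_eqF.
have bpos : 0 < L - a.
  have : r < 1.
    apply: (le_lt_trans rhi).
    rewrite /powR gt_eqF // -expR0 ltr_expR.
    rewrite mulNr oppr_lt0 mulr_gt0 // ?invr_gt0 //; exact: ln_gt0.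
  by rewrite rE -expR0 ltr_expR subr_lt0 subr_gt0.
rewrite -/L -/a.
rewrite lerBlDr -(ler_pM2r a0) mulfVK ?gt_eqF //.
rewrite leNgt; apply/negP => hu.
set h := (L - a) - u * a - a.
have h0 : 0 < h by rewrite /h; lra.
set d := Num.min (L - a) (h / (2 * (`|1 + u| + 1))).
have k0 : 0 < 2 * (`|1 + u| + 1) by rewrite mulr_gt0 // ltr_pwDr.
have d0 : 0 < d by rewrite /d lt_min bpos divr_gt0.
have db : d <= L - a by rewrite /d ge_min lexx.
have dh : d <= h / (2 * (`|1 + u| + 1)) by rewrite /d ge_min lexx orbT.
have hd : (1 + u) * d < h.
  apply: le_lt_trans (ler_norm _) _.
  rewrite normrM (ger0_norm (ltW d0)).
  have : d * (2 * (`|1 + u| + 1)) <= h by rewrite -ler_pdivlMr.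
  set w := `|1 + u| * d.
  have : d * (2 * (`|1 + u| + 1)) = 2 * w + 2 * d by rewrite /w; ring.
  lra.
set s := L - a - d.
set x := expR s.
have x1 : 1 <= x by rewrite /x -expR0 ler_expR /s; lra.
have xth : x <= theta by rewrite thE /x ler_expR /s; lra.
have thr : 1 <= theta <= theta by rewrite (ltW th1) lexx.
case Ax : (A theta [:: x]).
- have := H [:: x; theta] theta.
  rewrite /instance /= x1 xth thr => /(_ (conj isT isT) isT).
  rewrite /payoff /= Ax /pmax !big_cons big_nil.
  rewrite (max_l (ltW th1)) (max_r xth).
  rewrite /mult_err divff ?gt_eqF // minxx powR1 mulr1.
  rewrite ge_max => /andP[_].
  rewrite thE rE /x divexp -expRD -expRN ler_expR /s; lra.
- have := H [:: x] theta.
  rewrite /instance /= x1 xth thr => /(_ (conj isT isT) isT).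
  rewrite /payoff /= Ax /pmax !big_cons big_nil (max_l x1).
  have -> : mult_err x theta = x / theta.
    rewrite /mult_err min_l // thE /x !divexp ler_expR /s; lra.
  rewrite ge_max => /andP[_].
  rewrite thE rE /x divexp powR_expR -expRD -expRN div1r -expRN -expRD ler_expR.
  move: hd; rewrite /h /s => hd E.
  have : (1 + u) * d = d + u * d by ring.
  have : u * (L - a - d - L) = - (u * a) - u * d by ring.
  lra.
Qed.
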